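(* Let $G$ be an acyclic ADT network with a multicast connection $\mathcal C=\{(S,T_1,\mathcal X(S)),\dots,(S,T_N,\mathcal X(S))\}$. Let $\mathcal F$ be the set of all link-failure patterns $f$ for which $(G_f,\mathcal C)$ is solvable. Then there is a single fixed (static) linear network code that solves $(G_f,\mathcal C)$ simultaneously for every $f\in\mathcal F$, i.e. it achieves the multicast rate whatever failure $f\in\mathcal F$ occurs. Such a code exists over $\mathbb F_q$ whenever $q>|\mathcal F|N$.
   Context: ADT network model. $G=(\mathcal V,\mathcal E)$ is a directed acyclic network of supernodes, each with input ports $I(V)$ and output ports $O(V)$. Edges go from output ports to input ports of other supernodes. Linear coding over a finite field $\mathbb F_q$: - An output port $e\in O(V)$ carries $Y(e)=\sum_{e'\in I(V)}\beta_{(e',e)}Y(e')$. At $S$, the term $\sum_k\alpha_{(k,e)}X(S,k)$ is added. - An output port sends the same symbol on all of its outgoing edges. - An input port $e'$ receives $Y(e')=\sum_{(e,e')\in\mathcal E}Y(e)$, the sum taken over $\mathbb F_q$. - A destination $T$ outputs $Z(T,k)=\sum_{e'\in I(T)}\epsilon_{(e',(T,k))}Y(e')$. A failure pattern $f$ is a set of links of $G$. $G_f$ is the network $G$ with those links deleted, which is equivalent to setting to zero the coding variables associated with the failed links. $(G_f,\mathcal C)$ is solvable if some coefficient choice makes every $T_i$ output exactly $\mathcal X(S)$ in $G_f$. A code solves $(G_f,\mathcal C)$ if, when used unchanged in $G_f$, every $T_i$ can recover $\mathcal X(S)$, i.e. each square system matrix from $\mathcal X(S)$ to $T_i$ in $G_f$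 is nonsingular. *)

(* Defs.v *)
From HB Require Import structures.
From mathcomp Require Import all_boot all_order all_algebra.
Set Implicit Arguments. Unset Strict Implicit. Unset Printing Implicit Defensive.
Import GRing.Theory.
Local Open Scope ring_scope.

(* V  : supernodes;  PI : input ports;  PO : output ports.
   inown e' / outown e : the supernode owning an input / output port. *)

Section ADT.
Variables (V PI PO : finType) (inown : PI -> V) (outown : PO -> V).

Definition well_formed_adt (E : {set PO * PI}) : Prop :=
  forall p, p \in E -> outown p.1 != inown p.2.

Definition sn_adj (E : {set PO * PI}) : rel V :=
  fun u v => [exists p in E, (outown p.1 == u) && (inown p.2 == v)].

Definition acyclic_adt (E : {set PO * PI}) : Prop :=
  forall u v, sn_adj E u v -> ~~ connect (sn_adj E) v u.

(* A linear code over F for source rate r and N destinations: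
   alpha k e    = alpha_{(k,e)}          (used only for e in O(S)),
   beta e' e    = beta_{(e',e)}          (used only for e', e at the same supernode),
   eps i e' k   = eps_{(e',(T_i,k))}     (used only for e' in I(T_i)). *)
Record lcode (F : Type) (r N : nat) := LCode {
  alpha : 'I_r -> PO -> F;
  beta  : PI -> PO -> F;
  eps   : 'I_N -> PI -> 'I_r -> F }.

Variables (F : fieldType) (r N : nat) (S : V) (T : 'I_N -> V).

(* Symbols are represented by their coefficient row vectors w.r.t. the
   source symbols X(S,0..r-1).  Ef is the set of links still present. *)

Definition in_sym (Ef : {set PO * PI}) (Yo : PO -> 'rV[F]_r) (e' : PI) : 'rV[F]_r :=
  \sum_(e : PO | (e, e') \in Ef) Yo e.

Definition out_step (c : lcode F r N) (Ef : {set PO * PI}) (Yo : PO -> 'rV[F]_r)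
    (e : PO) : 'rV[F]_r :=
  \sum_(e' : PI | inown e' == outown e) beta c e' e *: in_sym Ef Yo e'
  + (if outown e == S then \row_k alpha c k e else 0).

(* In an acyclic network the recursion stabilises after #|V| rounds. *)
Definition out_sym (c : lcode F r N) (Ef : {set PO * PI}) : PO -> 'rV[F]_r :=
  iter #|V| (out_step c Ef) (fun _ => 0).

Definition dest_out (c : lcode F r N) (Ef : {set PO * PI}) (i : 'I_N) (k : 'I_r)
    : 'rV[F]_r :=
  \sum_(e' : PI | inown e' == T i) eps c i e' k *: in_sym Ef (out_sym c Ef) e'.

Definition sysmx (c : lcode F r N) (Ef : {set PO * PI}) (i : 'I_N) : 'M[F]_r :=
  \matrix_(j, k) dest_out c Ef i k 0 j.

Definition Gf (E f : {set PO * PI}) : {set PO * PI} := E :\: f.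

Definition solvable (E f : {set PO * PI}) : Prop :=
  exists c : lcode F r N, forall i, sysmx c (Gf E f) i = 1%:M.

Definition solves (c : lcode F r N) (E f : {set PO * PI}) : Prop :=
  forall i, sysmx c (Gf E f) i \in unitmx.

End ADT.

(* Main.v *)
Set Warnings "-notation-overridden,-ambiguous-paths".
Require Import Defs.
From HB Require Import structures.
From mathcomp Require Import all_boot all_order all_algebra.
From mathcomp Require Import ring.
Set Implicit Arguments. Unset Strict Implicit. Unset Printing Implicit Defensive.
Import GRing.Theory.
Local Open Scope ring_scope.

Lemma det_affine_col (F : fieldType) n (A B : 'M[F]_n) j :
  (forall i k, k != j -> B i k = 0) ->
  exists a b, forall t, \det (A + t *: B) = a + t * b.
Proof.
move=> HB.
exists (\sum_i A i j * cofactor A i j), (\sum_i B i j * cofactor A i j) => t.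
rewrite (expand_det_col _ j) mulr_sumr -big_split /=; apply: eq_bigr => i _.
have -> : cofactor (A + t *: B) i j = cofactor A i j.
  rewrite /cofactor; congr (_ * _); congr (\det _).
  apply/matrixP => k l; rewrite !mxE.
  by rewrite HB ?scaler0 ?mulr0 ?addr0 // eq_sym neq_lift.
by rewrite !mxE mulrDl mulrA.
Qed.

Lemma det_rank1 (F : fieldType) n (A : 'M[F]_n) (u : 'cV[F]_n) (v : 'rV[F]_n) :
  exists a b, forall t, \det (A + t *: (u *m v)) = a + t * b.
Proof.
pose M t := block_mx (1%:M : 'M[F]_1) v (- (t *: u)) A.
have HM t : \det (A + t *: (u *m v)) = \det (M t).
  have -> : M t = block_mx 1%:M 0 (- (t *: u)) 1%:M *m block_mx 1%:M v 0 (A + t *: (u *m v)).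
    rewrite mulmx_block !mul1mx !mul0mx ?mulmx0 !mulmx1 !addr0 ?add0r.
    rewrite mulNmx -scalemxAl; rewrite /M; congr block_mx; apply/matrixP => i j; rewrite !mxE; ring.
  by rewrite det_mulmx det_lblock det_ublock !det1 !mul1r.
have HM2 t : M t = M 0 + t *: block_mx 0 0 (- u) 0.
  by rewrite /M scale_block_mx add_block_mx !scaler0 !addr0 scale0r oppr0 add0r scalerN.
have H0 : forall i k, k != lshift n (ord0 : 'I_1) -> (block_mx 0 0 (- u) 0 : 'M[F]_(1 + n)) i k = 0.
  move=> i k; rewrite -[i](splitK) -[k](splitK).
  case: (split i) => [i'|i']; case: (split k) => [k'|k'] /=;
    rewrite ?block_mxEul ?block_mxEur ?block_mxEdl ?block_mxEdr ?mxE //.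
  by rewrite (ord1 k') eqxx.
have [a [b Hab]] := det_affine_col (M 0) H0.
by exists a, b => t; rewrite HM HM2 Hab.
Qed.

Section Net.
Variables (V PI PO : finType) (inown : PI -> V) (outown : PO -> V) (F : fieldType)
  (Ef : {set PO * PI}).
Hypothesis acyc : acyclic_adt inown outown Ef.

Local Notation adj := (sn_adj inown outown Ef).

Definition Lop r (b : PI -> PO -> F) (Y : PO -> 'rV[F]_r) (e : PO) : 'rV[F]_r :=
  \sum_(e' : PI | inown e' == outown e) b e' e *: in_sym Ef Y e'.
Definition gstep r b (inj : PO -> 'rV[F]_r) (Y : PO -> 'rV[F]_r) (e : PO) : 'rV[F]_r :=
  Lop b Y e + inj e.
Definition fp r b (inj : PO -> 'rV[F]_r) := iter #|V| (gstep b inj) (fun _ => 0).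

Definition mu v := #|[set w | connect adj w v]|.

Lemma mu_lt u v : adj u v -> (mu u < mu v)%N.
Proof.
move=> Huv; apply: proper_card; apply/properP; split.
  apply/subsetP => w; rewrite !inE => Hw.
  by apply: connect_trans Hw (connect1 Huv).
exists v; first by rewrite inE connect0.
by rewrite inE; apply: acyc.
Qed.

Lemma mu_ge1 v : (0 < mu v)%N.
Proof. by apply/card_gt0P; exists v; rewrite inE connect0. Qed.

Lemma mu_le v : (mu v <= #|V|)%N.
Proof. exact: max_card. Qed.

Lemma Lop_local r b (Y Y' : PO -> 'rV[F]_r) e :
  (forall e'', adj (outown e'') (outown e) -> Y e'' = Y' e'') -> Lop b Y e = Lop b Y' e.
Proof.
move=> H; rewrite /Lop; apply: eq_bigr => e' He'; congr (_ *: _).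
rewrite /in_sym; apply: eq_bigr => e'' Hin; apply: H.
by apply/existsP; exists (e'', e'); rewrite Hin /= eqxx He'.
Qed.

Lemma port_ind (P : PO -> Prop) :
  (forall e, (forall e'', adj (outown e'') (outown e) -> P e'') -> P e) -> forall e, P e.
Proof.
move=> IH; suff H : forall n e, (mu (outown e) < n)%N -> P e.
  by move=> e; apply: (H (mu (outown e)).+1).
elim=> [|n IHn] e // He; apply: IH => e'' Ha; apply: IHn.
exact: leq_trans (mu_lt Ha) He.
Qed.

Lemma fp_fix r b (inj : PO -> 'rV[F]_r) e : fp b inj e = Lop b (fp b inj) e + inj e.
Proof.
have H : forall m e, (mu (outown e) <= m)%N ->
    iter m (gstep b inj) (fun _ => 0) e = iter m.+1 (gstep b inj) (fun _ => 0) e.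
  elim=> [|m IH] e' He.
    by move: He (mu_ge1 (outown e')); case: (mu _).
  rewrite iterS [in RHS]iterS /gstep; congr (_ + _); apply: Lop_local => e'' Ha.
  by apply: IH; rewrite -ltnS; exact: leq_trans (mu_lt Ha) He.
by rewrite /fp H ?mu_le // iterS.
Qed.

Lemma fp_uniq r b (inj : PO -> 'rV[F]_r) Y :
  (forall e, Y e = Lop b Y e + inj e) -> forall e, Y e = fp b inj e.
Proof.
move=> HY; apply: port_ind => e IH; rewrite HY fp_fix; congr (_ + _).
by apply: Lop_local => e'' Ha; exact: IH.
Qed.

Lemma in_symD r (Y1 Y2 : PO -> 'rV[F]_r) e' :
  in_sym Ef (fun e => Y1 e + Y2 e) e' = in_sym Ef Y1 e' + in_sym Ef Y2 e'.
Proof. by rewrite /in_sym big_split. Qed.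

Lemma in_symM r1 r2 (Y : PO -> 'rV[F]_r1) (M : 'M[F]_(r1, r2)) e' :
  in_sym Ef (fun e => Y e *m M) e' = in_sym Ef Y e' *m M.
Proof. by rewrite /in_sym mulmx_suml. Qed.

Lemma LopD r b (Y1 Y2 : PO -> 'rV[F]_r) e :
  Lop b (fun e => Y1 e + Y2 e) e = Lop b Y1 e + Lop b Y2 e.
Proof.
rewrite /Lop -big_split; apply: eq_bigr => e' _; by rewrite in_symD scalerDr.
Qed.

Lemma LopM r1 r2 b (Y : PO -> 'rV[F]_r1) (M : 'M[F]_(r1, r2)) e :
  Lop b (fun e => Y e *m M) e = Lop b Y e *m M.
Proof.
rewrite /Lop mulmx_suml; apply: eq_bigr => e' _; by rewrite in_symM scalemxAl.
Qed.

Lemma in_symZ r (Y : PO -> 'rV[F]_r) t e' :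
  in_sym Ef (fun e => t *: Y e) e' = t *: in_sym Ef Y e'.
Proof. by rewrite /in_sym scaler_sumr. Qed.

Lemma LopZ r b (Y : PO -> 'rV[F]_r) t e :
  Lop b (fun e => t *: Y e) e = t *: Lop b Y e.
Proof.
rewrite /Lop scaler_sumr; apply: eq_bigr => e' _; by rewrite in_symZ !scalerA mulrC.
Qed.

Lemma fpD r b (i1 i2 : PO -> 'rV[F]_r) e :
  fp b (fun e => i1 e + i2 e) e = fp b i1 e + fp b i2 e.
Proof.
symmetry; apply: (fp_uniq (Y := fun e => fp b i1 e + fp b i2 e)) => e0.
by rewrite LopD (fp_fix b i1) (fp_fix b i2) addrACA.
Qed.

Lemma fpZ r b (i : PO -> 'rV[F]_r) t e :
  fp b (fun e => t *: i e) e = t *: fp b i e.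
Proof.
symmetry; apply: (fp_uniq (Y := fun e => t *: fp b i e)) => e0.
by rewrite LopZ (fp_fix b i) scalerDr.
Qed.

Lemma fpM r1 r2 b (i : PO -> 'rV[F]_r1) (M : 'M[F]_(r1, r2)) e :
  fp b (fun e => i e *m M) e = fp b i e *m M.
Proof.
symmetry; apply: (fp_uniq (Y := fun e => fp b i e *m M)) => e0.
by rewrite LopM (fp_fix b i) mulmxDl.
Qed.

Lemma fp_supp r b (inj : PO -> 'rV[F]_r) v0 :
  (forall e, ~~ connect adj v0 (outown e) -> inj e = 0) ->
  forall e, ~~ connect adj v0 (outown e) -> fp b inj e = 0.
Proof.
move=> Hinj; apply: port_ind => e IH Hn.
rewrite fp_fix Hinj // addr0 /Lop big1 // => e' He'.
rewrite /in_sym big1 ?scaler0 // => e'' Hin; apply: IH.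
  by apply/existsP; exists (e'', e'); rewrite Hin /= eqxx He'.
apply: contra Hn => Hc; apply: connect_trans Hc (connect1 _).
by apply/existsP; exists (e'', e'); rewrite Hin /= eqxx He'.
Qed.

End Net.

Section Net2.
Variables (V PI PO : finType) (inown : PI -> V) (outown : PO -> V) (F : fieldType)
  (Ef : {set PO * PI}).

Lemma in_sym_aff r1 r2 (Y : PO -> 'rV[F]_r2) (Z : PO -> 'rV[F]_r1) (M : 'M[F]_(r1,r2)) t e' :
  in_sym Ef (fun e => Y e + t *: (Z e *m M)) e' = in_sym Ef Y e' + t *: (in_sym Ef Z e' *m M).
Proof.
rewrite /in_sym big_split /= mulmx_suml scaler_sumr; congr (_ + _); apply: eq_bigr => e _; exact: scalemxAl.
Qed.

Lemma Lop_aff r1 r2 b (Y : PO -> 'rV[F]_r2) (Z : PO -> 'rV[F]_r1) (M : 'M[F]_(r1,r2)) t e :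
  Lop inown outown Ef b (fun e => Y e + t *: (Z e *m M)) e =
  Lop inown outown Ef b Y e + t *: (Lop inown outown Ef b Z e *m M).
Proof.
rewrite /Lop mulmx_suml scaler_sumr -big_split /=; apply: eq_bigr => e' _.
by rewrite in_sym_aff scalerDr -!scalemxAl !scalerA mulrC.
Qed.

Lemma Lop_beta r (b b' : PI -> PO -> F) e'0 e0 t (Y : PO -> 'rV[F]_r) e :
  (forall e' e, b' e' e = b e' e + (if (e' == e'0) && (e == e0) then t else 0)) ->
  Lop inown outown Ef b' Y e = Lop inown outown Ef b Y e +
    (if (e == e0) && (inown e'0 == outown e) then t *: in_sym Ef Y e'0 else 0).
Proof.
move=> Hb; rewrite /Lop.
rewrite (eq_bigr (fun e' => b e' e *: in_sym Ef Y e' +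
   (if (e' == e'0) && (e == e0) then t *: in_sym Ef Y e' else 0))); last first.
  by move=> e' _; rewrite Hb scalerDl; case: ifP; rewrite ?scale0r.
rewrite big_split /=; congr (_ + _).
case: (e == e0) => /=; last by rewrite big1 // => e' _; rewrite andbF.
rewrite -big_mkcondr /=.
case: ifP => Hc.
  rewrite (eq_bigl (fun e' => e' == e'0)) ?big_pred1_eq // => e'.
  by case: (eqVneq e' e'0) => [->|]; rewrite ?eqxx ?andbT ?andbF ?Hc.
rewrite big_pred0 // => e'; case: (eqVneq e' e'0) => [->|]; by rewrite ?andbT ?andbF ?Hc.
Qed.

End Net2.

From Stdlib Require Import FunctionalExtensionality.

Lemma mx11_mul (F : fieldType) r2 (h : 'rV[F]_1) (d : 'M[F]_(1, r2)) : h *m d = h 0 0 *: d.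
Proof. by rewrite {1}[h]mx11_scalar mul_scalar_mx. Qed.

Section Code.
Variables (V PI PO : finType) (inown : PI -> V) (outown : PO -> V) (F : fieldType)
  (r N : nat) (S : V) (T : 'I_N -> V) (Ef : {set PO * PI}).
Hypothesis acyc : acyclic_adt inown outown Ef.

Definition injc (c : lcode PI PO F r N) (e : PO) : 'rV[F]_r :=
  if outown e == S then \row_k alpha c k e else 0.

Lemma out_symE c : out_sym inown outown S c Ef = fp inown outown Ef (beta c) (injc c).
Proof. by []. Qed.

Lemma sysmx_pert c c0 i t (y : 'rV[F]_r) (w : 'I_r -> F) :
  (forall k, dest_out inown outown S T c Ef i k =
             dest_out inown outown S T c0 Ef i k + t *: (w k *: y)) ->
  sysmx inown outown S T c Ef i = sysmx inown outown S T c0 Ef i + t *: (trmx y *m \row_k w k).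
Proof.
move=> H; apply/matrixP => j k; rewrite !mxE H !mxE big_ord1 !mxE.
by rewrite [w k * _]mulrC.
Qed.

Lemma pert_alpha c0 k0 e0 i : exists (u : 'cV[F]_r) (v : 'rV[F]_r), forall c t,
  beta c = beta c0 -> eps c = eps c0 ->
  (forall k e, alpha c k e = alpha c0 k e + (if (k == k0) && (e == e0) then t else 0)) ->
  sysmx inown outown S T c Ef i = sysmx inown outown S T c0 Ef i + t *: (u *m v).
Proof.
pose d := \row_k ((k == k0)%:R : F) : 'rV[F]_r.
pose s := fun e => (if (outown e == S) && (e == e0) then 1%:M else 0 : 'rV[F]_1).
pose g := fp inown outown Ef (beta c0) s.
pose h k := (\sum_(e' | inown e' == T i) eps c0 i e' k *: in_sym Ef g e') : 'rV[F]_1.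
exists (trmx d), (\row_k h k 0 0) => c t Hb He Ha.
apply: sysmx_pert => k.
have Hinj : injc c = fun e => injc c0 e + t *: (s e *m d).
  apply: functional_extensionality => e; rewrite /injc /s.
  case: (outown e == S) => /=; last by rewrite mul0mx scaler0 addr0.
  have [->|Hne] := eqVneq e e0.
    rewrite ?eqxx mul1mx; apply/matrixP => l j; rewrite !mxE Ha eqxx andbT.
    by case: (j == k0); rewrite ?mulr1 ?mulr0.
  rewrite ?(negbTE Hne) mul0mx scaler0 addr0; apply/matrixP => l j.
  by rewrite !mxE Ha (negbTE Hne) andbF addr0.
have HY : out_sym inown outown S c Ef = fun e => out_sym inown outown S c0 Ef e + t *: (g e *m d).
  apply: functional_extensionality => e.
  by rewrite !out_symE Hb Hinj (fpD acyc) (fpZ acyc _ (fun e => s e *m d)) (fpM acyc _ s).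
rewrite /dest_out HY He scalerA [t * _]mulrC -scalerA -mx11_mul /h.
rewrite mulmx_suml -big_split /=; apply: eq_bigr => e' _.
by rewrite in_symD in_symZ in_symM scalerDr -scalemxAl scalemxAr.
Qed.

Lemma pert_beta c0 e'0 e0 i : exists (u : 'cV[F]_r) (v : 'rV[F]_r), forall c t,
  alpha c = alpha c0 -> eps c = eps c0 ->
  (forall e' e, beta c e' e = beta c0 e' e + (if (e' == e'0) && (e == e0) then t else 0)) ->
  sysmx inown outown S T c Ef i = sysmx inown outown S T c0 Ef i + t *: (u *m v).
Proof.
pose Y0 := out_sym inown outown S c0 Ef.
pose y := in_sym Ef Y0 e'0.
pose s := fun e => (if (e == e0) && (inown e'0 == outown e0) then 1%:M else 0 : 'rV[F]_1).
pose g := fp inown outown Ef (beta c0) s.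
pose h k := (\sum_(e' | inown e' == T i) eps c0 i e' k *: in_sym Ef g e') : 'rV[F]_1.
exists (trmx y), (\row_k h k 0 0) => c t Ha He Hb.
have Hg : inown e'0 == outown e0 -> in_sym Ef g e'0 = 0.
  move=> Hc; rewrite /in_sym big1 // => e Hin.
  apply: (@fp_supp _ _ _ _ _ _ _ acyc _ (beta c0) s (outown e0)) => [e1|].
    by rewrite /s; case: (eqVneq e1 e0) => [->|]; rewrite ?connect0.
  apply/negP => Hcon.
  have Hadj : sn_adj inown outown Ef (outown e) (outown e0).
    by apply/existsP; exists (e, e'0); rewrite Hin /= eqxx (eqP Hc) eqxx.
  by move: (acyc Hadj); rewrite Hcon.
have Hinj : injc c = injc c0 by rewrite /injc Ha.
have HY : out_sym inown outown S c Ef = fun e => Y0 e + t *: (g e *m y).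
  apply: functional_extensionality => e; rewrite out_symE Hinj.
  symmetry; apply: (fp_uniq acyc (Y := fun e => Y0 e + t *: (g e *m y))) => e1.
  rewrite (Lop_beta inown outown Ef _ _ Hb) Lop_aff in_sym_aff.
  rewrite {1}/Y0 out_symE (fp_fix acyc) -out_symE -/Y0.
  rewrite {1}/g (fp_fix acyc) -/g.
  rewrite /s; case: (eqVneq e1 e0) => [->|] /=; last first.
    by move=> _; rewrite !addr0 addrAC.
  case: ifP => Hc.
    rewrite Hg // mul0mx scaler0 addr0 mulmxDl mul1mx scalerDr.
    by rewrite -!addrA; congr (_ + _); rewrite addrC addrA.
  by rewrite !addr0 addrAC.
apply: sysmx_pert => k.
rewrite /dest_out HY He scalerA [t * _]mulrC -scalerA -mx11_mul /h.
rewrite mulmx_suml -big_split /=; apply: eq_bigr => e' _.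
by rewrite in_sym_aff scalerDr -scalemxAl scalemxAr.
Qed.

Lemma pert_eps c0 i0 e'0 k0 i : exists (u : 'cV[F]_r) (v : 'rV[F]_r), forall c t,
  alpha c = alpha c0 -> beta c = beta c0 ->
  (forall i' e' k, eps c i' e' k = eps c0 i' e' k + (if [&& i' == i0, e' == e'0 & k == k0] then t else 0)) ->
  sysmx inown outown S T c Ef i = sysmx inown outown S T c0 Ef i + t *: (u *m v).
Proof.
pose y := in_sym Ef (out_sym inown outown S c0 Ef) e'0.
exists (trmx y), (\row_k (if [&& i == i0, inown e'0 == T i & k == k0] then 1 else 0)) => c t Ha Hb He.
have HY : out_sym inown outown S c Ef = out_sym inown outown S c0 Ef.
  by rewrite !out_symE Hb /injc Ha.
apply: sysmx_pert => k.
rewrite /dest_out HY.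
rewrite (eq_bigr (fun e' => eps c0 i e' k *: in_sym Ef (out_sym inown outown S c0 Ef) e' +
   (if [&& i == i0, e' == e'0 & k == k0] then t *: in_sym Ef (out_sym inown outown S c0 Ef) e' else 0))); last first.
  by move=> e' _; rewrite He scalerDl; case: ifP; rewrite ?scale0r.
rewrite big_split /=; congr (_ + _).
case: (i == i0) => /=; last by rewrite scale0r scaler0 big1.
case: (k == k0) => /=; last first.
  by rewrite andbF scale0r scaler0 big1 // => e' _; rewrite andbF.
rewrite andbT.
under eq_bigr do rewrite andbT.
rewrite -big_mkcondr /=.
case: ifP => Hc.
  rewrite scale1r (eq_bigl (fun e' => e' == e'0)) ?big_pred1_eq // => e'.
  by case: (eqVneq e' e'0) => [->|]; rewrite ?eqxx ?andbT ?andbF ?Hc.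
rewrite scale0r scaler0 big_pred0 // => e'; case: (eqVneq e' e'0) => [->|]; by rewrite ?andbT ?andbF ?Hc.
Qed.

End Code.

Section Main.
Variables (V PI PO : finType) (inown : PI -> V) (outown : PO -> V) (F : fieldType)
  (r N : nat) (S : V) (T : 'I_N -> V) (Ef : {set PO * PI}).
Hypothesis acyc : acyclic_adt inown outown Ef.

Definition Var := (('I_r * PO) + (PI * PO) + ('I_N * PI * 'I_r))%type.

Definition mk (th : Var -> F) : lcode PI PO F r N :=
  LCode (fun k e => th (inl (inl (k, e)))) (fun e' e => th (inl (inr (e', e))))
        (fun i e' k => th (inr (i, e', k))).

Definition upd (th : Var -> F) (x : Var) (a : F) : Var -> F :=
  fun v => if v == x then a else th v.

Lemma det_aff th x i : exists a b, forall t,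
  \det (sysmx inown outown S T (mk (upd th x t)) Ef i) = a + t * b.
Proof.
set c0 := mk (upd th x 0).
suff [u [v H]] : exists (u : 'cV[F]_r) (v : 'rV[F]_r), forall t,
    sysmx inown outown S T (mk (upd th x t)) Ef i = sysmx inown outown S T c0 Ef i + t *: (u *m v).
  have [a [b Hab]] := det_rank1 (sysmx inown outown S T c0 Ef i) u v.
  by exists a, b => t; rewrite H Hab.
case: x @c0 => [[[k0 e0]|[e'0 e0]]|[[i0 e'0] k0]] c0.
- have [u [v H]] := pert_alpha S T acyc c0 k0 e0 i.
  exists u, v => t; apply: H.
  + apply: functional_extensionality => e'; apply: functional_extensionality => e.
    by rewrite /= /upd.
  + apply: functional_extensionality => i'; apply: functional_extensionality => e'.
    apply: functional_extensionality => k; by rewrite /= /upd.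
  + move=> k e; rewrite /= /upd.
    have E1 : forall a b, (inl (inl a) == inl (inl b) :> Var) = (a == b).
      by move=> a b; apply/eqP/eqP => [[]|->].
    by rewrite E1 xpair_eqE; case: ifP; rewrite ?add0r ?addr0.
- have [u [v H]] := pert_beta S T acyc c0 e'0 e0 i.
  exists u, v => t; apply: H.
  + apply: functional_extensionality => k; apply: functional_extensionality => e.
    by rewrite /= /upd.
  + apply: functional_extensionality => i'; apply: functional_extensionality => e'.
    apply: functional_extensionality => k; by rewrite /= /upd.
  + move=> e' e; rewrite /= /upd.
    have E1 : forall a b, (inl (inr a) == inl (inr b) :> Var) = (a == b).
      by move=> a b; apply/eqP/eqP => [[]|->].
    by rewrite E1 xpair_eqE; case: ifP; rewrite ?add0r ?addr0.
- have [u [v H]] := pert_eps inown outown S T Ef c0 i0 e'0 k0 i.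
  exists u, v => t; apply: H.
  + apply: functional_extensionality => k; apply: functional_extensionality => e.
    by rewrite /= /upd.
  + apply: functional_extensionality => e'; apply: functional_extensionality => e.
    by rewrite /= /upd.
  + move=> i' e' k; rewrite /= /upd.
    have E1 : forall a b, (inr a == inr b :> Var) = (a == b).
      by move=> a b; apply/eqP/eqP => [[]|->].
    by rewrite E1 !xpair_eqE andbA; case: ifP; rewrite ?add0r ?addr0.
Qed.

End Main.

Section Comb.
Variables (X I : finType) (F : finFieldType) (P : {set I}) (D : I -> (X -> F) -> F).
Hypothesis Daff : forall p (th : X -> F) x, exists a b, forall t,
  D p (fun v => if v == x then t else th v) = a + t * b.
Hypothesis Hcard : (#|P| < #|F|)%N.

Lemma D_ext p (f g : X -> F) : (forall v, f v = g v) -> D p f = D p g.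
Proof. by move=> H; congr (D p _); apply: functional_extensionality. Qed.

Definition agreeb (th th' : {ffun X -> F}) (s : seq X) :=
  [forall v, (v \notin s) ==> (th v == th' v)].

Definition goodb (s : seq X) (th0 : {ffun X -> F}) p :=
  [exists th : {ffun X -> F}, agreeb th th0 s && (D p th != 0)].

Lemma comb s (th0 : {ffun X -> F}) :
  (forall p, p \in P -> goodb s th0 p) ->
  exists th : {ffun X -> F}, agreeb th th0 s /\ forall p, p \in P -> D p th != 0.
Proof.
elim: s th0 => [|x s IH] th0 H.
  exists th0; split; first by apply/forallP => v; rewrite eqxx implybT.
  move=> p /H /existsP [th /andP [Hag HD]].
  have -> : th0 = th.
    by apply/ffunP => v; move/forallP: Hag => /(_ v); rewrite in_nil /= => /eqP.
  exact: HD.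
pose th1 a := [ffun v => if v == x then a else th0 v].
pose bad p a := ~~ goodb s (th1 a) p.
have uniq_bad : forall p a b, p \in P -> bad p a -> bad p b -> a = b.
  move=> p a b Hp Ha Hb; apply/eqP/negPn/negP => Hab.
  move: (H p Hp) => /existsP [th /andP [Hag HD]].
  have [al [be Hl]] := Daff p th x.
  have Hz : forall c, bad p c -> D p (fun v => if v == x then c else th v) = 0.
    move=> c Hc; apply/eqP; apply: contraNT Hc => Hne.
    apply/existsP; exists [ffun v => if v == x then c else th v].
    rewrite (@D_ext p _ (fun v => if v == x then c else th v)); last by move=> v; rewrite ffunE.
    rewrite Hne andbT; apply/forallP => v; apply/implyP => Hv; rewrite !ffunE.
    case: (eqVneq v x) => // Hvx; move/forallP: Hag => /(_ v); rewrite in_cons negb_or Hvx Hv.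
    by move=> /eqP ->.
  have Ea := Hz a Ha; have Eb := Hz b Hb; rewrite Hl in Ea; rewrite Hl in Eb.
  have Hbe : be = 0.
    have : (a - b) * be = 0 by rewrite mulrBl -[a * be](addKr al) Ea -[b * be](addKr al) Eb subrr.
    by move/eqP; rewrite mulf_eq0 subr_eq0 (negbTE Hab) => /eqP.
  have Hal : al = 0 by move: Ea; rewrite Hbe mulr0 addr0.
  move: HD; rewrite (@D_ext p _ (fun v => if v == x then th x else th v)).
    by rewrite Hl Hal Hbe mulr0 addr0 eqxx.
  by move=> v; case: eqVneq => // ->.
pose Bad := [set a | [exists p in P, bad p a]].
have HB : (#|Bad| <= #|P|)%N.
  apply: leq_trans (leq_imset_card (fun p => odflt 0 [pick a | bad p a]) P).
  apply: subset_leq_card; apply/subsetP => a; rewrite inE => /existsP [p /andP [Hp Hba]].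
  apply/imsetP; exists p => //.
  case: pickP => [a' Ha'|/(_ a)]; last by rewrite Hba.
  by rewrite /= (uniq_bad p a a').
have [a Ha|Hn] := pickP (fun a => a \notin Bad); last first.
  have : (#|F| <= #|Bad|)%N.
    by apply: subset_leq_card; apply/subsetP => a _; move: (Hn a) => /= /negbFE.
  by move=> /leq_trans /(_ HB); rewrite leqNgt Hcard.
have Hgood : forall p, p \in P -> goodb s (th1 a) p.
  move=> p Hp; move: Ha; rewrite /= inE; apply: contraR => Hg.
  by apply/existsP; exists p; rewrite Hp.
have [th [Hag HD]] := IH (th1 a) Hgood.
exists th; split => //; apply/forallP => v; apply/implyP.
rewrite in_cons negb_or => /andP [Hvx Hv].
by move/forallP: Hag => /(_ v); rewrite Hv /= ffunE (negbTE Hvx).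
Qed.

End Comb.

Lemma acyc_sub (V PI PO : finType) (inown : PI -> V) (outown : PO -> V) (E f : {set PO * PI}) :
  acyclic_adt inown outown E -> acyclic_adt inown outown (Gf E f).
Proof.
move=> H u v Huv.
have sub : subrel (sn_adj inown outown (Gf E f)) (sn_adj inown outown E).
  move=> a b /existsP [p /andP [Hp H2]]; apply/existsP; exists p; rewrite H2 andbT.
  by move: Hp; rewrite inE => /andP [].
apply: contra (H u v (sub _ _ Huv)).
by apply: connect_sub => a b Hab; apply: connect1; apply: sub.
Qed.

Theorem theorem9 (V PI PO : finType) (inown : PI -> V) (outown : PO -> V)
    (E : {set PO * PI}) (S : V) (r N : nat) (T : 'I_N -> V) (F : finFieldType)
    (Fam : {set {set PO * PI}}) :
  well_formed_adt inown outown E ->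
  acyclic_adt inown outown E ->
  (forall f : {set PO * PI},
     f \in Fam <-> (f \subset E /\ solvable inown outown F r S T E f)) ->
  (#|Fam| * N < #|F|)%N ->
  exists c : lcode PI PO F r N,
    forall f, f \in Fam -> solves inown outown S T c E f.
Proof.
move=> _ Hacyc HFam Hcard.
pose X : finType := (('I_r * PO) + (PI * PO) + ('I_N * PI * 'I_r))%type.
pose P := setX Fam [set: 'I_N].
pose D (p : {set PO * PI} * 'I_N) (th : X -> F) :=
  \det (sysmx inown outown S T (@mk PI PO F r N th) (Gf E p.1) p.2).
have Daff : forall p (th : X -> F) x, exists a b, forall t,
    D p (fun v => if v == x then t else th v) = a + t * b.
  move=> p th x; exact: (det_aff S T (@acyc_sub _ _ _ inown outown E p.1 Hacyc) th x p.2).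
have HcP : (#|P| < #|F|)%N by rewrite cardsX cardsT card_ord.
have Hinit : forall p, p \in P -> goodb D (enum X) [ffun _ => 0] p.
  case=> f i; rewrite inE /= => /andP [Hf _].
  have [_ [c Hc]] := (HFam f).1 Hf.
  apply/existsP.
  exists [ffun v : X => match v with
    | inl (inl (k, e)) => alpha c k e
    | inl (inr (e', e)) => beta c e' e
    | inr (i', e', k) => eps c i' e' k end].
  apply/andP; split.
    by apply/forallP => v; rewrite mem_enum.
  rewrite /D /= (_ : @mk PI PO F r N _ = c) ?Hc ?det1 ?oner_neq0 //.
  case: c Hc => al be ep Hc; rewrite /mk; congr LCode;
    repeat (apply: functional_extensionality => ?); by rewrite ffunE.
have [th [_ HD]] := @comb _ _ F P D Daff HcP (enum X) [ffun _ => 0] Hinit.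
exists (mk th) => f Hf i.
have := HD (f, i); rewrite /D /= inE /= Hf inE => /(_ isT) Hd.
by rewrite unitmxE unitfE.
Qed.
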